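(* The space $(\mathbb{R}^{\mathbb{Z}_<},\tau_{\mathrm{St}})$ is not a Hausdorff space, but it is a preregular space (any two St-distinguishable points can be separated by disjoint neighbourhoods).
   Context: $\mathbb{R}^{\mathbb{Z}_<}$ is the set of formal series $\sum_{i\ge -k}a_i\epsilon^i$ ($k\in\mathbb{N}\cup\{0\}$, $a_i\in\mathbb{R}$), written $\langle a_{-k},\dots,\widehat{a_0},a_1,\dots\rangle$, with coefficientwise addition, Cauchy-product multiplication and lexicographic order ($\mathbf{x}<\mathbf{y}$ iff at the least index where coefficients differ, $\mathbf{x}$'s coefficient is smaller); reals are the elements with only $a_0$ possibly nonzero; $|\mathbf{x}|$ is the absolute value for this order. The metric is $d(\mathbf{x},\mathbf{y})=|\mathbf{y}-\mathbf{x}|\in\mathbb{R}^{\mathbb{Z}_<}$ and $B_{\mathbf{x}}(\mathbf{y})=\{\mathbf{z}: d(\mathbf{x},\mathbf{z})<\mathbf{y}\}$. A set $O$ is St-open iff for every $\mathbf{x}\in O$ there is $n\in\mathbb{N}$ with $B_{\mathbf{x}}(1/n)\subseteq O$; $\tau_{\mathrm{St}}$ is the topology generated by unions of balls with real radius (St-balls), i.e. the St-open sets. Two points are St-distinguishable iff some St-open set contains exactly one of them. *)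

(* Defs.v *)
From Stdlib Require Import Reals Lra Lia ZArith Classical ClassicalEpsilon.
Open Scope R_scope.

(* Elements of R^{Z_<}: formal series sum_{i >= -k} a_i eps^i, i.e. coefficient
   functions Z -> R vanishing below some index -k (k a natural number). *)
Record LC := mkLC {
  coef : Z -> R;
  coef_lb : exists k : nat, forall i : Z, (i < - Z.of_nat k)%Z -> coef i = 0
}.

Lemma sub_lb (x y : LC) :
  exists k : nat, forall i : Z, (i < - Z.of_nat k)%Z -> coef x i - coef y i = 0.
Proof.
  destruct (coef_lb x) as [k1 H1]; destruct (coef_lb y) as [k2 H2].
  exists (Nat.max k1 k2); intros i Hi.
  rewrite H1, H2; [lra| |]; lia.
Qed.

Definition LCsub (x y : LC) : LC := mkLC (fun i => coef x i - coef y i) (sub_lb x y).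

Lemma opp_lb (x : LC) :
  exists k : nat, forall i : Z, (i < - Z.of_nat k)%Z -> - coef x i = 0.
Proof.
  destruct (coef_lb x) as [k H]; exists k; intros i Hi; rewrite H; [lra|lia].
Qed.

Definition LCopp (x : LC) : LC := mkLC (fun i => - coef x i) (opp_lb x).

Lemma real_lb (r : R) :
  exists k : nat, forall i : Z, (i < - Z.of_nat k)%Z ->
    (if Z.eq_dec i 0 then r else 0) = 0.
Proof.
  exists 0%nat; intros i Hi; destruct (Z.eq_dec i 0); [lia|reflexivity].
Qed.

Definition LCreal (r : R) : LC :=
  mkLC (fun i => if Z.eq_dec i 0 then r else 0) (real_lb r).

Definition LClt (x y : LC) : Prop :=
  exists i : Z, (forall j : Z, (j < i)%Z -> coef x j = coef y j) /\ coef x i < coef y i.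

Definition LCabs (x : LC) : LC :=
  if excluded_middle_informative (LClt x (LCreal 0)) then LCopp x else x.

Definition LCdist (x y : LC) : LC := LCabs (LCsub y x).

Definition ball (x r : LC) : LC -> Prop := fun z => LClt (LCdist x z) r.

Definition St_open (O : LC -> Prop) : Prop :=
  forall x, O x -> exists n : nat, (0 < n)%nat /\
    forall z, ball x (LCreal (1 / INR n)) z -> O z.

Definition St_distinguishable (x y : LC) : Prop :=
  exists O : LC -> Prop, St_open O /\ ((O x /\ ~ O y) \/ (O y /\ ~ O x)).

Definition St_separated (x y : LC) : Prop :=
  exists U V : LC -> Prop, St_open U /\ St_open V /\ U x /\ V y /\
    (forall z, ~ (U z /\ V z)).

Definition St_Hausdorff : Prop :=
  forall x y : LC, x <> y -> St_separated x y.

Definition St_preregular : Prop :=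
  forall x y : LC, St_distinguishable x y -> St_separated x y.

(* Main.v *)
Require Import Defs.
From Stdlib Require Import Reals ZArith.
From Stdlib Require Import Lra Lia Classical ClassicalEpsilon.
Open Scope R_scope.

Lemma small_inv (eta : R) : 0 < eta ->
  exists m : nat, (0 < m)%nat /\ 1 / INR m < eta.
Proof.
  intros H. destruct (archimed_cor1 eta H) as [N [H1 H2]].
  exists N; split; auto. unfold Rdiv; rewrite Rmult_1_l; exact H1.
Qed.

Lemma creal0 (i : Z) : coef (LCreal 0) i = 0.
Proof. simpl. destruct (Z.eq_dec i 0); reflexivity. Qed.

Lemma abs_coef (w : LC) (i : Z) :
  coef (LCabs w) i = coef w i \/ coef (LCabs w) i = - coef w i.
Proof.
  unfold LCabs; destruct (excluded_middle_informative (LClt w (LCreal 0))); simpl; auto.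
Qed.

Lemma abs_first (w : LC) (i : Z) :
  (forall j, (j < i)%Z -> coef (LCabs w) j = 0) -> coef (LCabs w) i >= 0.
Proof.
  unfold LCabs; destruct (excluded_middle_informative (LClt w (LCreal 0))) as [Hl|Hn];
    simpl; intros H.
  - destruct Hl as [k [Hk1 Hk2]]. rewrite creal0 in Hk2.
    destruct (Z.lt_trichotomy i k) as [Hik|[Hik|Hik]].
    + rewrite Hk1 by exact Hik. rewrite creal0. lra.
    + subst. lra.
    + specialize (H k Hik). simpl in H. lra.
  - destruct (Rlt_or_le (coef w i) 0) as [Hlt|Hle]; [|lra].
    exfalso; apply Hn. exists i; split.
    + intros j Hj. rewrite creal0. apply H; exact Hj.
    + rewrite creal0; exact Hlt.
Qed.

Lemma inv_pos (m : nat) : (0 < m)%nat -> 0 < 1 / INR m.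
Proof.
  intros H. apply lt_0_INR in H. unfold Rdiv. rewrite Rmult_1_l. apply Rinv_0_lt_compat; exact H.
Qed.

Lemma ball_char (z z' : LC) (m : nat) : (0 < m)%nat ->
  ball z (LCreal (1 / INR m)) z' ->
  (forall j, (j < 0)%Z -> coef z' j = coef z j) /\
  Rabs (coef z' 0 - coef z 0) <= 1 / INR m.
Proof.
  intros Hm Hb. pose proof (inv_pos m Hm) as Hp.
  unfold ball, LCdist in Hb. set (w := LCsub z' z) in *.
  destruct Hb as [i [H1 H2]].
  assert (Hi : (0 <= i)%Z).
  { destruct (Z_lt_le_dec i 0) as [Hlt|]; [|assumption]. exfalso.
    assert (coef (LCabs w) i >= 0).
    { apply abs_first. intros j Hj. rewrite H1 by exact Hj. simpl.
      destruct (Z.eq_dec j 0); [lia|reflexivity]. }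
    simpl in H2. destruct (Z.eq_dec i 0); [lia|]. lra. }
  assert (Hneg : forall j, (j < 0)%Z -> coef (LCabs w) j = 0).
  { intros j Hj. rewrite H1 by lia. simpl. destruct (Z.eq_dec j 0); [lia|reflexivity]. }
  assert (H0 : coef (LCabs w) 0 <= 1 / INR m).
  { destruct (Z.eq_dec i 0) as [->|Hn].
    - simpl in H2. lra.
    - rewrite H1 by lia. simpl. lra. }
  assert (Hge : coef (LCabs w) 0 >= 0) by (apply abs_first; exact Hneg).
  split.
  - intros j Hj. specialize (Hneg j Hj).
    destruct (abs_coef w j) as [E|E]; rewrite E in Hneg; simpl in Hneg; lra.
  - destruct (abs_coef w 0) as [E|E]; rewrite E in H0, Hge; simpl in H0, Hge;
      unfold Rabs; destruct (Rcase_abs _); lra.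
Qed.

Lemma ball_intro (z z' : LC) (m : nat) : (0 < m)%nat ->
  (forall j, (j <= 0)%Z -> coef z' j = coef z j) ->
  ball z (LCreal (1 / INR m)) z'.
Proof.
  intros Hm H. pose proof (inv_pos m Hm) as Hp.
  unfold ball, LCdist. exists 0%Z; split.
  - intros j Hj. simpl. destruct (Z.eq_dec j 0); [lia|].
    destruct (abs_coef (LCsub z' z) j) as [E|E]; rewrite E; simpl; rewrite H by lia; lra.
  - simpl. destruct (abs_coef (LCsub z' z) 0) as [E|E]; rewrite E; simpl; rewrite H by lia; lra.
Qed.

Definition S (x : LC) (d : R) : LC -> Prop :=
  fun z => (forall j, (j < 0)%Z -> coef z j = coef x j) /\ Rabs (coef z 0 - coef x 0) < d.

Lemma open_S (x : LC) (d : R) : St_open (S x d).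
Proof.
  intros z [Hz1 Hz2].
  destruct (small_inv (d - Rabs (coef z 0 - coef x 0))) as [m [Hm Hm2]]; [lra|].
  exists m; split; auto. intros z' Hb. destruct (ball_char z z' m Hm Hb) as [B1 B2].
  split.
  - intros j Hj. rewrite B1 by exact Hj. apply Hz1; exact Hj.
  - revert B2 Hz2 Hm2. unfold Rabs; repeat destruct (Rcase_abs _); lra.
Qed.

Lemma sep_of_diff (x y : LC) :
  (exists j, (j <= 0)%Z /\ coef x j <> coef y j) -> St_separated x y.
Proof.
  intros [j [Hj Hd]].
  destruct (Z.eq_dec j 0) as [->|Hn].
  - set (c := Rabs (coef x 0 - coef y 0)).
    assert (Hc : 0 < c).
    { unfold c, Rabs; destruct (Rcase_abs _); [lra|].
      destruct (Req_dec (coef x 0) (coef y 0)); [contradiction|lra]. }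
    exists (S x (c/2)), (S y (c/2)).
    split; [apply open_S|]. split; [apply open_S|].
    split. { split; auto. unfold Rminus; rewrite Rplus_opp_r, Rabs_R0; lra. }
    split. { split; auto. unfold Rminus; rewrite Rplus_opp_r, Rabs_R0; lra. }
    intros z [[_ A] [_ B]]. revert A B. unfold c. unfold Rabs; repeat destruct (Rcase_abs _); lra.
  - exists (S x 1), (S y 1).
    split; [apply open_S|]. split; [apply open_S|].
    split. { split; auto. unfold Rminus; rewrite Rplus_opp_r, Rabs_R0; lra. }
    split. { split; auto. unfold Rminus; rewrite Rplus_opp_r, Rabs_R0; lra. }
    intros z [[A _] [B _]]. apply Hd. rewrite <- A by lia. apply B; lia.
Qed.

Lemma diff_of_open (O : LC -> Prop) (x y : LC) :
  St_open O -> O x -> ~ O y -> exists j, (j <= 0)%Z /\ coef x j <> coef y j.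
Proof.
  intros HO Hx Hy. destruct (classic (exists j, (j <= 0)%Z /\ coef x j <> coef y j)) as [E|E];
    [exact E|].
  exfalso. destruct (HO x Hx) as [n [Hn Hb]]. apply Hy, Hb, ball_intro; auto.
  intros j Hj. destruct (Req_dec (coef y j) (coef x j)) as [e|e]; auto.
  exfalso; apply E; exists j; split; auto.
Qed.

Lemma eps_lb : exists k : nat, forall i : Z, (i < - Z.of_nat k)%Z ->
    (if Z.eq_dec i 1 then 1 else 0) = 0.
Proof. exists 0%nat; intros i Hi; destruct (Z.eq_dec i 1); [lia|reflexivity]. Qed.

Definition eps : LC := mkLC (fun i => if Z.eq_dec i 1 then 1 else 0) eps_lb.

Theorem mainTheorem2 : ~ St_Hausdorff /\ St_preregular.
Proof.
  split.
  - intros H. assert (Hne : LCreal 0 <> eps).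
    { intros E. assert (C : coef (LCreal 0) 1 = coef eps 1) by (rewrite E; reflexivity).
      simpl in C. lra. }
    destruct (H _ _ Hne) as [U [V [HU [HV [Ux [Vy Hd]]]]]].
    apply (Hd eps); split; auto.
    destruct (HU _ Ux) as [n [Hn Hb]]. apply Hb, ball_intro; auto.
    intros j Hj. simpl. destruct (Z.eq_dec j 1); [lia|]. destruct (Z.eq_dec j 0); reflexivity.
  - intros x y [O [HO [[A B]|[A B]]]].
    + apply sep_of_diff. exact (diff_of_open O x y HO A B).
    + apply sep_of_diff. destruct (diff_of_open O y x HO A B) as [j [Hj Hd]].
      exists j; split; auto.
Qed.
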